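(* Let $n$ be an even positive integer and $a$ a parameter. Let $L_n(a)$ be the $n\times n$ tridiagonal matrix with $(L_n(a))_{i,i}=ia$ for $1\le i\le n$, $(L_n(a))_{i,i+1}=n-i$ for $1\le i\le n-1$, $(L_n(a))_{i,i-1}=i-1$ for $2\le i\le n$, and all other entries $0$. Then the characteristic polynomial $\det(zI_n-L_n(a))$ of $L_n(a)$ equals $$\Lambda_n(a;z):=\prod_{\substack{1\le i<j\le n\\ i+j=n+1}}\left[(z-ia)(z-ja)-(i-j)^2\right].$$ *)

(* Defs.v *)
From mathcomp Require Import all_boot all_algebra.
Set Implicit Arguments. Unset Strict Implicit. Unset Printing Implicit Defensive.
Import GRing.Theory.
Local Open Scope ring_scope.

(* L_n(a), with 0-based indices: row/col i : 'I_n corresponds to 1-based i+1.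
   (L)_{i,i} = (i+1) a ; (L)_{i,i+1} = n-(i+1) ; (L)_{i,i-1} = (i+1)-1 = i. *)
Definition Lmat (R : comNzRingType) (n : nat) (a : R) : 'M[R]_n :=
  \matrix_(i < n, j < n)
    (if j == i :> nat then (i.+1)%:R * a
     else if j == i.+1 :> nat then (n - i.+1)%:R
     else if j.+1 == i :> nat then (i.+1 - 1)%:R
     else 0).

(* Lambda_n(a;z) = prod_{1<=i<j<=n, i+j=n+1} [(z - i a)(z - j a) - (i-j)^2],
   indexed by the 1-based i in 1..n, with j := n+1-i. *)
Definition Lambda (R : comNzRingType) (n : nat) (a : R) : {poly R} :=
  \prod_(1 <= i < n.+1 | (i < n.+1 - i)%N)
     (('X - (i%:R * a)%:P) * ('X - ((n.+1 - i)%:R * a)%:P)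
        - (((n.+1 - i) - i)%:R) ^+ 2).

(* Main.v *)
Require Import Defs.
From mathcomp Require Import all_boot all_algebra.
From mathcomp Require Import ring zify.
Import GRing.Theory.
Local Open Scope ring_scope.
Set Implicit Arguments. Unset Strict Implicit. Unset Printing Implicit Defensive.

Section S.
Variable R : comNzRingType.
Variable a : R.

Definition qp : {poly R} := 1 + a%:P * 'X - 'X^2.
Definition Top (n : nat) (p : {poly R}) : {poly R} :=
  qp * p^`() + ((n%:R - 1) * 'X + a%:P) * p.

Lemma dqp : qp^`() = a%:P - 'X *+ 2.
Proof. rewrite /qp !derivE. ring. Qed.

Lemma Top_q m p : Top m.+2 (qp * p) = qp * (Top m p + a%:P * p).
Proof.
rewrite /Top derivM dqp -!natr1. rewrite /qp. ring.
Qed.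

Lemma rVpolyE n (v : 'rV[R]_n) : rVpoly v = \sum_(j < n) v 0 j *: 'X^j.
Proof.
rewrite {1}(row_sum_delta v) linear_sum /=. apply: eq_bigr => j _.
by rewrite linearZ /= rVpoly_delta.
Qed.

Lemma rVpoly_mul m n (v : 'rV[R]_m) (A : 'M[R]_(m, n)) :
  rVpoly (v *m A) = \sum_i v 0 i *: rVpoly (row i A).
Proof.
rewrite mulmx_sum_row linear_sum /=; apply: eq_bigr => i _; by rewrite linearZ.
Qed.

Lemma Top_sum n (I : finType) (c : I -> R) (p : I -> {poly R}) :
  Top n (\sum_i c i *: p i) = \sum_i c i *: Top n (p i).
Proof.
rewrite /Top linear_sum /= mulr_sumr mulr_sumr -big_split /=.
apply: eq_bigr => i _; rewrite derivZ scalerDr -!scalerAr //.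
Qed.

Lemma TopXn n (i : nat) : (i < n)%N ->
  Top n 'X^i = ((i.+1)%:R * a) *: 'X^i + (n - i.+1)%:R *: 'X^(i.+1)
                + i%:R *: 'X^(i.-1).
Proof.
move=> lt_in; rewrite /Top /qp derivXn natrB //.
case: i lt_in => [|j] lt_jn /=.
  rewrite mulr0n mulr0 expr0 scale0r addr0 -!mul_polyC !polyCM !polyC_natr.
  rewrite -!natr1; ring.
rewrite -!mul_polyC !exprS !polyCM !polyC_natr -!natr1.
ring.
Qed.

Lemma rowL n (i : 'I_n) : rVpoly (row i (Lmat n a)) = Top n 'X^i.
Proof.
rewrite TopXn //; apply/polyP => k.
rewrite coef_rVpoly !coefD !coefZ !coefXn.
case: insubP => [k' kn kk'|].
  rewrite !mxE -kk'.
  case: i => y Hy /=; case: k' kk' => x Hx /= _.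
  case: y Hy => [|y] Hy /=; repeat (case: eqP => //= ?); try lia; subst;
   rewrite ?mulr1 ?mulr0 ?addr0 ?add0r ?subn1 //=.
case: i => y Hy /= kn.
repeat (case: eqP => //= ?); try lia; rewrite ?mulr0 ?addr0 ?add0r ?mulr1 //.
have -> : (n - y.+1)%N = 0%N by lia. by [].
Qed.

Lemma rVpoly_mulL n (v : 'rV[R]_n) : rVpoly (v *m Lmat n a) = Top n (rVpoly v).
Proof.
rewrite rVpoly_mul rVpolyE Top_sum; apply: eq_bigr => i _; by rewrite rowL.
Qed.

Definition basis (c : nat) : {poly R} := if (c < 2)%N then 'X^c else qp * 'X^(c - 2).

Lemma size_qp : (size qp <= 3)%N.
Proof.
rewrite /qp; apply: leq_trans (size_add _ _) _; rewrite size_opp size_polyXn geq_max andbT.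
apply: leq_trans (size_add _ _) _; rewrite size_poly1 geq_max /=.
apply: leq_trans (size_mul_leq _ _) _; rewrite size_polyX; move: (size_polyC_leq1 a); lia.
Qed.

Lemma size_basis m (c : 'I_m.+2) : (size (basis c) <= m.+2)%N.
Proof.
rewrite /basis; case: ifP => c2; first by rewrite size_polyXn; lia.
apply: leq_trans (size_mul_leq _ _) _; rewrite size_polyXn; move: size_qp (ltn_ord c); lia.
Qed.

Definition B1 m : 'M[R]_(2, m.+2) := \matrix_(c < 2) poly_rV ('X^c).
Definition B2 m : 'M[R]_(m, m.+2) := \matrix_(l < m) poly_rV (qp * 'X^l).
Definition Bm m : 'M[R]_(m.+2) := col_mx (B1 m) (B2 m).

Lemma BmE m (i j : 'I_m.+2) : Bm m i j = (basis i)`_j.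
Proof.
rewrite /Bm /basis mxE; case: splitP => k ->.
  by rewrite !mxE ltn_ord.
rewrite !mxE /=; have -> : (2 + k - 2 = k)%N by lia. by [].
Qed.

Lemma coef_qp k : qp`_k = (k == 0%N)%:R + a * (k == 1%N)%:R - (k == 2%N)%:R.
Proof. by rewrite /qp coefB coefD coef1 coefCM coefX coefXn. Qed.

Lemma det_Bm2 m : \det (Bm m) ^+ 2 = 1.
Proof.
rewrite det_trig; last first.
  apply/is_trig_mxP => i j lt_ij; rewrite BmE /basis.
  case: ifP => i2; first by rewrite coefXn; case: eqP => //; lia.
  rewrite coefMXn coef_qp; case: ifP => // _.
  have : (2 < j - (i - 2))%N by lia.
  case: (j - (i - 2))%N => [|[|[|k]]] //= _. by rewrite mulr0 subr0 addr0.
transitivity (\prod_i (Bm m i i)^+2); first by rewrite prodrXl.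
apply: big1 => i _; rewrite BmE /basis.
case: ifP => i2; first by rewrite coefXn eqxx expr1n.
rewrite coefMXn coef_qp ifF; last lia.
have -> : (i - (i - 2) = 2)%N by lia.
by rewrite /= mulr0 add0r sub0r sqrrN expr1n.
Qed.

Lemma cp_sim n (B A A' : 'M[R]_n) : \det B ^+ 2 = 1 -> B *m A = A' *m B ->
  char_poly A = char_poly A'.
Proof.
move=> dB eq.
have E : map_mx polyC B *m char_poly_mx A = char_poly_mx A' *m map_mx polyC B.
  rewrite /char_poly_mx mulmxBr mulmxBl -map_mxM eq map_mxM.
  by rewrite mul_mx_scalar mul_scalar_mx.
have := congr1 determinant E; rewrite !det_mulmx det_map_mx /= -/(char_poly A) -/(char_poly A').
move=> /(congr1 (fun p => (\det B)%:P * p)).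
by rewrite mulrA (mulrC (char_poly A')) mulrA -!polyCM -expr2 dB !mul1r.
Qed.

Lemma size_qpX l : (size (qp * 'X^l)%R <= l.+3)%N.
Proof. apply: leq_trans (size_mul_leq _ _) _; rewrite size_polyXn; move: size_qp; lia. Qed.

Lemma part2 m : B2 m *m Lmat m.+2 a = B2 m *m 0 + (Lmat m a + a%:M) *m B2 m.
Proof.
rewrite mulmx0 add0r; apply/row_matrixP => l; apply: (can_inj rVpolyK).
rewrite !row_mul rVpoly_mulL rowK poly_rV_K; last first.
  by apply: leq_trans (size_qpX _) _; move: (ltn_ord l); lia.
rewrite Top_q rVpoly_mul.
rewrite (eq_bigr (fun e : 'I_m => qp * ((Lmat m a + a%:M) l e *: 'X^e))); last first.
  move=> e _; rewrite rowK poly_rV_K -?scalerAr ?mxE //.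
  by apply: leq_trans (size_qpX _) _; move: (ltn_ord e); lia.
rewrite -big_distrr /=.
transitivity (qp * rVpoly (row l (Lmat m a + a%:M))); last first.
  by rewrite rVpolyE; congr (_ * _); apply: eq_bigr => e _; rewrite mxE.
rewrite !linearD /= rowL -scalemx1 !linearZ /= row1.
by rewrite rVpoly_delta mul_polyC.
Qed.

Definition Cm m : 'M[R]_2 := \matrix_(i < 2, j < 2)
  (if i == j :> nat then (if i == 0 :> nat then a else (m.+2)%:R * a) else (m.+1)%:R).
Definition Um m : 'M[R]_(2, m) := \matrix_(i < 2, j < m)
  (if (i == 1 :> nat) && (j == 0 :> nat) then - (m%:R) else 0).

Lemma part1 m : B1 m *m Lmat m.+2 a = Cm m *m B1 m + Um m *m B2 m.
Proof.
apply/row_matrixP => c; apply: (can_inj rVpolyK).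
rewrite !row_mul rVpoly_mulL rowK poly_rV_K; last first.
  by rewrite size_polyXn; move: (ltn_ord c); lia.
rewrite !linearD /= !row_mul !rVpoly_mul !big_ord_recl big_ord0 !rowK.
rewrite !poly_rV_K ?size_polyXn //.
rewrite (eq_bigr (fun e : 'I_m => Um m c e *: (qp * 'X^e))); last first.
  move=> e _; rewrite rowK poly_rV_K ?mxE //.
  by apply: leq_trans (size_qpX _) _; move: (ltn_ord e); lia.
rewrite !mxE /= /bump /=.
case: c => [[|[|//]] Hc] /=.
  rewrite big1; last by move=> e _; rewrite mxE /= scale0r.
  rewrite /Top /qp /= derivXn -!mul_polyC /= ?polyCM ?polyC_natr -!natr1 ?mulr0n !expr0 ?expr1; ring.
rewrite (_ : \sum_(i < m) Um m (Ordinal Hc) i *: (qp * 'X^i) = - (m%:R * qp)).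
  rewrite /Top /qp /= derivXn -!mul_polyC /= ?polyCM ?polyC_natr -!natr1 ?mulr0n !expr0 ?expr1.
  ring.
case: m Hc => [|m'] Hc; first by rewrite big_ord0 mul0r oppr0.
rewrite big_ord_recl big1 ?addr0; last by move=> e _; rewrite mxE /= scale0r.
by rewrite mxE /= expr0 mulr1 scaleNr -mul_polyC polyC_natr.
Qed.

Lemma cp_ublock n1 n2 (A : 'M[R]_n1) (B : 'M[R]_(n1, n2)) (D : 'M[R]_n2) :
  char_poly (block_mx A B 0 D) = char_poly A * char_poly D.
Proof.
rewrite /char_poly /char_poly_mx (scalar_mx_block n1 n2) map_block_mx map_mx0.
by rewrite opp_block_mx add_block_mx oppr0 addr0 det_ublock.
Qed.

Lemma sim m b : Bm m *m (Lmat m.+2 a + b%:M) =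
  block_mx (Cm m + b%:M) (Um m) 0 (Lmat m a + (a + b)%:M) *m Bm m.
Proof.
have E : Bm m *m Lmat m.+2 a = block_mx (Cm m) (Um m) 0 (Lmat m a + a%:M) *m Bm m.
  transitivity (col_mx (B1 m *m Lmat m.+2 a) (B2 m *m Lmat m.+2 a)).
    exact (mul_col_mx (B1 m) (B2 m) (Lmat m.+2 a)).
  rewrite part1 part2 /Bm /block_mx !mul_col_mx !mul_row_col mul0mx mulmx0 //.
have F : block_mx (Cm m + b%:M) (Um m) 0 (Lmat m a + (a + b)%:M) =
   block_mx (Cm m) (Um m) 0 (Lmat m a + a%:M) + b%:M.
  rewrite (scalar_mx_block 2 m) add_block_mx; congr block_mx.
  - by rewrite addr0.
  - by rewrite addr0.
  - rewrite -addrA; congr (_ + _); apply/matrixP => i j; rewrite !mxE mulrnDl //.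
rewrite F.
transitivity (Bm m *m Lmat m.+2 a + Bm m *m b%:M).
  exact (mulmxDr (Bm m) (Lmat m.+2 a) b%:M).
rewrite E mul_mx_scalar -mul_scalar_mx.
symmetry; exact (mulmxDl (block_mx (Cm m) (Um m) 0 (Lmat m a + a%:M)) b%:M (Bm m)).
Qed.

Lemma cpC m b : char_poly (Cm m + b%:M) =
  ('X - (1%:R * a + b)%:P) * ('X - ((m.+2)%:R * a + b)%:P) - ((m.+1)%:R)^+2.
Proof.
rewrite /char_poly (expand_det_row _ 0) !big_ord_recl big_ord0 /cofactor !det_mx11.
rewrite !mxE /= /bump /= !mulr1n !mulr0n !addr0 !sub0r ?mul1r ?expr0 ?expr1 ?mul1r ?add0r.
rewrite !polyCD !polyCM !polyC_natr; ring.
Qed.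

Definition LamB m b : {poly R} :=
  \prod_(1 <= i < m.+1 | (i < m.+1 - i)%N)
     (('X - (i%:R * a + b)%:P) * ('X - ((m.+1 - i)%:R * a + b)%:P)
        - (((m.+1 - i) - i)%:R) ^+ 2).

Lemma LamB_rec m b : LamB m.+2 b =
  (('X - (1%:R * a + b)%:P) * ('X - ((m.+2)%:R * a + b)%:P) - ((m.+1)%:R)^+2)
  * LamB m (a + b).
Proof.
rewrite /LamB big_ltn_cond //=.
have -> : (m.+3 - 1 = m.+2)%N by [].
have -> : (m.+3 - 1 - 1 = m.+1)%N by [].
congr (_ * _).
rewrite big_add1 /= big_mkcond big_nat_recr //= ifF; last by lia.
rewrite mulr1 [in RHS]big_mkcond; apply: eq_big_nat => i /andP [i1 im].
have -> : (m.+3 - i.+1 = (m.+1 - i).+1)%N by lia.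
have -> : (i.+1 < (m.+1 - i).+1)%N = (i < m.+1 - i)%N by [].
case: ifP => // _.
have -> : ((m.+1 - i).+1 - i.+1 = m.+1 - i - i)%N by lia.
rewrite -!natr1 !polyCD !polyCM; ring.
Qed.

Lemma mainS k b : char_poly (Lmat (k.*2) a + b%:M) = LamB (k.*2) b.
Proof.
elim: k b => [|k IH] b.
  by rewrite /char_poly det_mx00 /LamB big_geq.
rewrite doubleS (cp_sim (det_Bm2 _) (sim _ _)).
etransitivity; first exact (cp_ublock (Cm (k.*2) + b%:M) (Um (k.*2)) (Lmat (k.*2) a + (a+b)%:M)).
by rewrite cpC IH LamB_rec.
Qed.
End S.

Theorem lemmaA3 (R : comNzRingType) (n : nat) (a : R) :
  (0 < n)%N -> ~~ odd n ->
  char_poly (Lmat n a) = Lambda n a.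
Proof.
move=> _ hodd.
have hn : n = (n./2).*2 by rewrite -[LHS](odd_double_half n) (negbTE hodd).
have -> : Lmat n a = Lmat n a + (0 : R)%:M.
  by apply/matrixP => i j; rewrite !mxE mul0rn addr0.
rewrite [in LHS]hn mainS -hn /LamB /Lambda; apply: eq_bigr => i _; rewrite !addr0 //.
Qed.
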